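(* Let $(X,\Sigma,\mu)$ be a measure space, $n\ge1$, $\mathbb{F}\in\{\mathbb{R},\mathbb{C}\}$, $h\in L^2(X,\mu;\mathbb{F})$, $d\in\mathbb{F}^n$, and define $T:L^2(X,\mu;\mathbb{F}^n)\to\mathbb{F}^n$ by $T(F)=\int_X h(x)f_x\,d\mu(x)$ for $F=(f_x)_{x\in X}$. Suppose $T^{-1}(\{d\})$ contains a continuous frame. Then $\mathcal{F}^{\mathbb{F}}_{(X,\mu),n}\cap T^{-1}(\{d\})$ is dense in $T^{-1}(\{d\})$ (for the norm of $L^2(X,\mu;\mathbb{F}^n)$).
   Context: A family $\Phi=(\varphi_x)_{x\in X}$ in $\mathbb{F}^n$ (with measurable coordinates) is a continuous frame indexed by $(X,\mu)$ if there are $0<A\le B$ with $A\|v\|^2\le\int_X|\langle v,\varphi_x\rangle|^2d\mu(x)\le B\|v\|^2$ for all $v\in\mathbb{F}^n$. $\mathcal{F}^{\mathbb{F}}_{(X,\mu),n}$ denotes the set of such frames, viewed as a subset of $L^2(X,\mu;\mathbb{F}^n)$ (equivalently, the elements of $L^2(X,\mu;\mathbb{F}^n)$ whose coordinate functions are linearly independent in $L^2(X,\mu;\mathbb{F})$). *)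

(* Defs.v *)
From HB Require Import structures.
From mathcomp Require Import all_boot all_order all_algebra.
From mathcomp Require Import all_classical all_reals all_analysis.
From mathcomp Require Import complex.

Set Implicit Arguments.
Unset Strict Implicit.
Unset Printing Implicit Defensive.

Import Order.TTheory GRing.Theory Num.Theory.
Local Open Scope classical_set_scope.
Local Open Scope ring_scope.

(* To treat both cases uniformly,
   the definitions are parameterised by the scalar ring F together with its
   real part [re], imaginary part [im] and conjugation [cj] (for F = R:
   re = id, im = 0, cj = id; for F = C: Re, Im, complex conjugation). *)
Section Frames.
Context (R : realType) (dX : measure_display) (X : measurableType dX)
        (mu : {measure set X -> \bar R}).
Context (F : comNzRingType) (re im : F -> R) (cj : F -> F).

Definition sqmod (z : F) : R := re z ^+ 2 + im z ^+ 2.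

Definition Fmeasurable (g : X -> F) : Prop :=
  measurable_fun setT (re \o g) /\ measurable_fun setT (im \o g).

Definition in_L2 (g : X -> F) : Prop :=
  Fmeasurable g /\ (\int[mu]_x (sqmod (g x))%:E < +oo)%E.

Definition inner n (v w : 'rV[F]_n) : F := \sum_(i < n) v ord0 i * cj (w ord0 i).

Definition vnorm2 n (v : 'rV[F]_n) : R := \sum_(i < n) sqmod (v ord0 i).

Definition in_L2vec n (Phi : X -> 'rV[F]_n) : Prop :=
  forall i : 'I_n, in_L2 (fun x => Phi x ord0 i).

Definition L2dist2 n (Phi Psi : X -> 'rV[F]_n) : \bar R :=
  (\int[mu]_x (vnorm2 (Phi x - Psi x))%:E)%E.

Definition is_cont_frame n (Phi : X -> 'rV[F]_n) : Prop :=
  in_L2vec Phi /\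
  exists A B : R, 0 < A /\ A <= B /\
    forall v : 'rV[F]_n,
      ((A * vnorm2 v)%:E <= \int[mu]_x (sqmod (inner v (Phi x)))%:E)%E /\
      (\int[mu]_x (sqmod (inner v (Phi x)))%:E <= (B * vnorm2 v)%:E)%E.

Definition Fintegral_is (g : X -> F) (c : F) : Prop :=
  mu.-integrable setT (EFin \o (re \o g)) /\
  mu.-integrable setT (EFin \o (im \o g)) /\
  (\int[mu]_x (re (g x))%:E = (re c)%:E)%E /\
  (\int[mu]_x (im (g x))%:E = (im c)%:E)%E.

Definition Tmap_is n (h : X -> F) (Phi : X -> 'rV[F]_n) (d : 'rV[F]_n) : Prop :=
  forall i : 'I_n, Fintegral_is (fun x => h x * Phi x ord0 i) (d ord0 i).

Definition cor62_statement n : Prop :=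
  forall (h : X -> F) (d : 'rV[F]_n),
    in_L2 h ->
    (exists Phi0 : X -> 'rV[F]_n, is_cont_frame Phi0 /\ Tmap_is h Phi0 d) ->
    forall Psi : X -> 'rV[F]_n, in_L2vec Psi -> Tmap_is h Psi d ->
    forall eps : R, 0 < eps ->
      exists Phi : X -> 'rV[F]_n,
        is_cont_frame Phi /\ Tmap_is h Phi d /\
        (L2dist2 Phi Psi < (eps ^+ 2)%:E)%E.

End Frames.

Definition reR {R : realType} (x : R) : R := x.
Definition imR {R : realType} (x : R) : R := 0.
Definition cjR {R : realType} (x : R) : R := x.
Definition reC {R : realType} (z : complex.complex R) : R := complex.Re z.
Definition imC {R : realType} (z : complex.complex R) : R := complex.Im z.
Definition cjC {R : realType} (z : complex.complex R) : complex.complex R :=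
  complex.conjc z.

(* Main.v *)
Require Import Defs.
From HB Require Import structures.
From mathcomp Require Import all_boot all_order all_algebra.
From mathcomp Require Import all_classical all_reals all_analysis.
From mathcomp Require Import complex.
From mathcomp Require Import ring lra.
From mathcomp Require Import measurable_realfun.
Set Implicit Arguments.
Unset Strict Implicit.
Unset Printing Implicit Defensive.
Import Order.TTheory GRing.Theory Num.Theory.
Local Open Scope classical_set_scope.
Local Open Scope ring_scope.

Section Gen.
Context (R : realType) (dX : measure_display) (X : measurableType dX)
        (mu : {measure set X -> \bar R}).
Context (F : fieldType) (re im : F -> R) (cj : F -> F) (mk : R -> R -> F).
Hypothesis reD : forall x y, re (x + y) = re x + re y.
Hypothesis imD : forall x y, im (x + y) = im x + im y.
Hypothesis reM : forall x y, re (x * y) = re x * re y - im x * im y.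
Hypothesis imM : forall x y, im (x * y) = re x * im y + im x * re y.
Hypothesis re1 : re 1 = 1.
Hypothesis im1 : im 1 = 0.
Hypothesis recj : forall x, re (cj x) = re x.
Hypothesis imcj : forall x, im (cj x) = - im x.
Hypothesis eqF : forall x y, re x = re y -> im x = im y -> x = y.
Hypothesis remk : forall a b, re (mk a b) = a.
Hypothesis Him : (forall z, im z = 0) \/ (forall a b, im (mk a b) = b).

Lemma re0 : re 0 = 0.
Proof. have := reD 0 0; rewrite addr0 => h; lra. Qed.
Lemma im0 : im 0 = 0.
Proof. have := imD 0 0; rewrite addr0 => h; lra. Qed.
Lemma reN x : re (- x) = - re x.
Proof. have := reD x (- x); rewrite subrr re0 => h; lra. Qed.
Lemma imN x : im (- x) = - im x.
Proof. have := imD x (- x); rewrite subrr im0 => h; lra. Qed.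
Lemma reB x y : re (x - y) = re x - re y.
Proof. by rewrite reD reN. Qed.
Lemma imB x y : im (x - y) = im x - im y.
Proof. by rewrite imD imN. Qed.
Lemma re_sum I (s : seq I) P (f : I -> F) :
  re (\sum_(i <- s | P i) f i) = \sum_(i <- s | P i) re (f i).
Proof. exact: (big_morph re reD re0). Qed.
Lemma im_sum I (s : seq I) P (f : I -> F) :
  im (\sum_(i <- s | P i) f i) = \sum_(i <- s | P i) im (f i).
Proof. exact: (big_morph im imD im0). Qed.

Definition rl (r : R) : F := mk r 0.
Lemma rerl r : re (rl r) = r. Proof. exact: remk. Qed.
Lemma imrl r : im (rl r) = 0.
Proof. by case: Him => h; rewrite /rl h. Qed.
Lemma rerlM r z : re (rl r * z) = r * re z.
Proof. by rewrite reM rerl imrl mul0r subr0. Qed.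
Lemma imrlM r z : im (rl r * z) = r * im z.
Proof. by rewrite imM rerl imrl mul0r addr0. Qed.
Lemma rl1 : rl 1 = 1.
Proof. by apply: eqF; rewrite ?rerl ?imrl ?re1 ?im1. Qed.
Lemma rlM a b : rl (a * b) = rl a * rl b.
Proof. by apply: eqF; rewrite ?rerlM ?imrlM ?rerl ?imrl ?mulr0. Qed.

Lemma cjD x y : cj (x + y) = cj x + cj y.
Proof. by apply: eqF; rewrite ?(reD,imD,recj,imcj); ring. Qed.
Lemma cj0 : cj 0 = 0.
Proof. by apply: eqF; rewrite ?recj ?imcj ?re0 ?im0 ?oppr0. Qed.
Lemma cjM x y : cj (x * y) = cj x * cj y.
Proof. by apply: eqF; rewrite ?(reM,imM,recj,imcj); ring. Qed.
Lemma cjK x : cj (cj x) = x.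
Proof. by apply: eqF; rewrite ?recj ?imcj ?opprK. Qed.
Lemma cjrl r : cj (rl r) = rl r.
Proof. by apply: eqF; rewrite ?recj ?imcj ?imrl ?oppr0. Qed.
Lemma cjB x y : cj (x - y) = cj x - cj y.
Proof. by apply: eqF; rewrite ?(reB,imB,recj,imcj); ring. Qed.
Lemma cj_sum I (s : seq I) P (f : I -> F) :
  cj (\sum_(i <- s | P i) f i) = \sum_(i <- s | P i) cj (f i).
Proof. exact: (big_morph cj cjD cj0). Qed.

Local Notation sqm := (sqmod re im).
Lemma sqmE z : sqm z = re (z * cj z).
Proof. by rewrite /sqmod reM recj imcj; ring. Qed.
Lemma im_sqm z : im (z * cj z) = 0.
Proof. by rewrite imM recj imcj; ring. Qed.
Lemma sqm_ge0 z : 0 <= sqm z.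
Proof. by rewrite /sqmod addr_ge0 // sqr_ge0. Qed.
Lemma sqmM x y : sqm (x * y) = sqm x * sqm y.
Proof. by rewrite /sqmod reM imM; ring. Qed.
Lemma sqm_cj x : sqm (cj x) = sqm x.
Proof. by rewrite /sqmod recj imcj sqrrN. Qed.
Lemma sqm_rl r : sqm (rl r) = r ^+ 2.
Proof. by rewrite /sqmod rerl imrl expr0n addr0. Qed.
Lemma sqm_eq0 z : sqm z = 0 -> z = 0.
Proof.
rewrite /sqmod => h.
have h1 : re z ^+ 2 = 0 by have := sqr_ge0 (re z); have := sqr_ge0 (im z); lra.
have h2 : im z ^+ 2 = 0 by have := sqr_ge0 (re z); have := sqr_ge0 (im z); lra.
by apply: eqF; rewrite ?re0 ?im0; apply/eqP; rewrite -sqrf_eq0; apply/eqP.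
Qed.
Lemma sqmD2 x y : sqm (x + y) <= 2 * sqm x + 2 * sqm y.
Proof.
rewrite /sqmod reD imD.
have := sqr_ge0 (re x - re y); have := sqr_ge0 (im x - im y); nra.
Qed.
Lemma re_bound s x y : 0 < s -> 2 * re (x * y) <= s * sqm x + s^-1 * sqm y.
Proof.
move=> s0; rewrite /sqmod reM.
have si : s * s^-1 = 1 by rewrite mulfV // gt_eqF.
have si0 : 0 < s^-1 by rewrite invr_gt0.
set t := s^-1 in si si0 *.
have h1 := mulr_ge0 (ltW si0) (sqr_ge0 (s * re x - re y)).
have h2 := mulr_ge0 (ltW si0) (sqr_ge0 (s * im x + im y)).
have e1 : t * (s * re x - re y) ^+ 2 = (s * t) * (s * re x ^+ 2) - 2 * (s * t) * (re x * re y) + t * re y ^+ 2 by ring.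
have e2 : t * (s * im x + im y) ^+ 2 = (s * t) * (s * im x ^+ 2) + 2 * (s * t) * (im x * im y) + t * im y ^+ 2 by ring.
rewrite si !mul1r in e1 e2.
lra.
Qed.

Local Notation rint f := (mu.-integrable setT (EFin \o f)).
Local Notation mfun f := (measurable_fun setT f).
Definition RI (f : X -> R) : R := Rintegral mu setT f.
Implicit Types (f g : X -> R).
Lemma RI_ext f g : (forall x, f x = g x) -> RI f = RI g.
Proof. by move=> h; congr RI; apply: funext. Qed.

Lemma mfD f g : mfun f -> mfun g -> mfun (fun x => f x + g x).
Proof. exact: measurable_funD. Qed.
Lemma mfB f g : mfun f -> mfun g -> mfun (fun x => f x - g x).
Proof. exact: measurable_funB. Qed.
Lemma mfM f g : mfun f -> mfun g -> mfun (fun x => f x * g x).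
Proof. exact: measurable_funM. Qed.
Lemma mfZ k f : mfun f -> mfun (fun x => k * f x).
Proof. by move=> h; apply: mfM => //; exact: measurable_cst. Qed.
Lemma mfX f : mfun f -> mfun (fun x => f x ^+ 2).
Proof. exact: measurable_funX. Qed.
Lemma mf_sum I (s : seq I) (P : pred I) (f : I -> X -> R) :
  (forall i, mfun (f i)) -> mfun (fun x => \sum_(i <- s | P i) f i x).
Proof.
move=> h; elim: s => [|i s ih].
  by under eq_fun do rewrite big_nil; exact: measurable_cst.
under eq_fun do rewrite big_cons.
case: (P i) => //; exact: mfD.
Qed.

Lemma rint_mf f : rint f -> mfun f.
Proof. by move/measurable_int/measurable_EFinP. Qed.
Lemma rintD f g : rint f -> rint g -> rint (fun x => f x + g x).
Proof.
by move=> hf hg; apply: eq_integrable (integrableD _ hf hg) => // x _.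
Qed.
Lemma rintZ k f : rint f -> rint (fun x => k * f x).
Proof.
by move=> hf; apply: eq_integrable (integrableZl _ k hf) => // x _.
Qed.
Lemma rintN f : rint f -> rint (fun x => - f x).
Proof.
move=> hf; apply: eq_integrable (rintZ (-1) hf) => // x _ /=.
by rewrite mulN1r.
Qed.
Lemma rintB f g : rint f -> rint g -> rint (fun x => f x - g x).
Proof. by move=> hf hg; apply: rintD => //; exact: rintN. Qed.
Lemma rint0 : rint (fun _ => 0).
Proof.
apply: (@eq_integrable _ _ _ mu setT measurableT (cst 0%E)) => //.
exact: integrable0.
Qed.
Lemma rint_sum I (s : seq I) (P : pred I) (f : I -> X -> R) :
  (forall i, rint (f i)) -> rint (fun x => \sum_(i <- s | P i) f i x).
Proof.
move=> h; elim: s => [|i s ih].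
  by apply: eq_integrable rint0 => // x _; rewrite /= big_nil.
apply: eq_integrable (_ : rint (fun x => (if P i then f i x else 0) +
   \sum_(j <- s | P j) f j x)) => [//|x _|].
  by rewrite /= big_cons; case: (P i); rewrite ?add0r.
apply: rintD => //; case: (P i) => //; exact: rint0.
Qed.
Lemma rint_le f g : mfun f -> rint g -> (forall x, `|f x| <= g x) -> rint f.
Proof.
move=> mf hg hfg; apply: (le_integrable _ _ _ hg) => //.
  exact/measurable_EFinP.
move=> x _ /=; rewrite lee_fin (le_trans (hfg x)) //.
exact: ler_norm.
Qed.
Lemma rint_ge0 f : mfun f -> (forall x, 0 <= f x) ->
  (\int[mu]_x (f x)%:E < +oo)%E -> rint f.
Proof.
move=> mf f0 hf; apply/integrableP; split; first exact/measurable_EFinP.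
rewrite (_ : (fun x => `|(EFin \o f) x|%E) = fun x => (f x)%:E) //.
by apply/funext => x /=; rewrite ger0_norm ?f0.
Qed.
Lemma RI_EFin f : rint f -> (\int[mu]_x (f x)%:E)%E = (RI f)%:E.
Proof. by move=> hf; rewrite /RI /Rintegral fineK // integrable_fin_num. Qed.
Lemma RID f g : rint f -> rint g -> RI (fun x => f x + g x) = RI f + RI g.
Proof. by move=> hf hg; rewrite /RI RintegralD. Qed.
Lemma RIZ k f : rint f -> RI (fun x => k * f x) = k * RI f.
Proof. by move=> hf; rewrite /RI RintegralZl. Qed.
Lemma RIN f : rint f -> RI (fun x => - f x) = - RI f.
Proof.
move=> hf; rewrite -mulN1r -RIZ //; congr RI; apply: funext => x.
by rewrite mulN1r.
Qed.
Lemma RIB f g : rint f -> rint g -> RI (fun x => f x - g x) = RI f - RI g.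
Proof. by move=> hf hg; rewrite RID ?RIN //; exact: rintN. Qed.
Lemma RI0 : RI (fun _ => 0) = 0.
Proof. by rewrite /RI /Rintegral integral0. Qed.
Lemma RI_sum I (s : seq I) (P : pred I) (f : I -> X -> R) :
  (forall i, rint (f i)) ->
  RI (fun x => \sum_(i <- s | P i) f i x) = \sum_(i <- s | P i) RI (f i).
Proof.
move=> h; elim: s => [|i s ih].
  by rewrite big_nil -[RHS]RI0; apply: RI_ext => x; rewrite big_nil.
rewrite big_cons.
have -> : (fun x => \sum_(j <- i :: s | P j) f j x) =
  (fun x => (if P i then f i x else 0) + \sum_(j <- s | P j) f j x).
  by apply: funext => x; rewrite big_cons; case: (P i); rewrite ?add0r.
rewrite RID ?ih //; last by apply: rint_sum.
  by case: (P i) => //; rewrite RI0 add0r.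
by case: (P i) => //; exact: rint0.
Qed.
Lemma RI_le f g : rint f -> rint g -> (forall x, f x <= g x) -> RI f <= RI g.
Proof. by move=> hf hg h; apply: le_Rintegral. Qed.
Lemma RI_ge0 f : (forall x, 0 <= f x) -> 0 <= RI f.
Proof. by move=> h; apply: Rintegral_ge0. Qed.

Definition Int (u : X -> F) := rint (fun x => re (u x)) /\ rint (fun x => im (u x)).
Definition Iv (u : X -> F) : F := mk (RI (fun x => re (u x))) (RI (fun x => im (u x))).

Lemma reIv u : re (Iv u) = RI (fun x => re (u x)).
Proof. exact: remk. Qed.
Lemma imIv u : im (Iv u) = RI (fun x => im (u x)).
Proof.
case: Him => h; last exact: h.
by rewrite h (RI_ext (g := fun _ => 0)) ?RI0.
Qed.
Lemma Iv_ext u1 u2 : (forall x, u1 x = u2 x) -> Iv u1 = Iv u2.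
Proof. by move=> h; congr Iv; apply: funext. Qed.
Lemma IntD u1 u2 : Int u1 -> Int u2 -> Int (fun x => u1 x + u2 x).
Proof.
move=> [h1 h2] [h3 h4]; split.
  by apply: eq_integrable (rintD h1 h3) => // x _ /=; rewrite reD.
by apply: eq_integrable (rintD h2 h4) => // x _ /=; rewrite imD.
Qed.
Lemma IvD u1 u2 : Int u1 -> Int u2 -> Iv (fun x => u1 x + u2 x) = Iv u1 + Iv u2.
Proof.
move=> [h1 h2] [h3 h4]; apply: eqF.
  by rewrite reD !reIv -RID //; apply: RI_ext => x; rewrite reD.
by rewrite imD !imIv -RID //; apply: RI_ext => x; rewrite imD.
Qed.
Lemma IntZ c u : Int u -> Int (fun x => c * u x).
Proof.
move=> [h1 h2]; split.
  apply: eq_integrable (rintB (rintZ (re c) h1) (rintZ (im c) h2)) => // x _ /=.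
  by rewrite reM.
apply: eq_integrable (rintD (rintZ (re c) h2) (rintZ (im c) h1)) => // x _ /=.
by rewrite imM.
Qed.
Lemma IvZ c u : Int u -> Iv (fun x => c * u x) = c * Iv u.
Proof.
move=> [h1 h2]; apply: eqF.
  rewrite reM reIv imIv reIv -!RIZ // -RIB; try exact: rintZ.
  by apply: RI_ext => x; rewrite reM.
rewrite imM imIv reIv imIv -!RIZ // -RID; try exact: rintZ.
by apply: RI_ext => x; rewrite imM.
Qed.
Lemma Int0 : Int (fun _ => 0).
Proof.
by split; apply: eq_integrable rint0 => // x _; rewrite /= ?re0 ?im0.
Qed.
Lemma Iv0 : Iv (fun _ => 0) = 0.
Proof. by apply: eqF; rewrite ?reIv ?imIv ?re0 ?im0 RI0. Qed.
Lemma Int_sum I (s : seq I) (u : I -> X -> F) :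
  (forall i, Int (u i)) -> Int (fun x => \sum_(i <- s) u i x).
Proof.
move=> h; elim: s => [|i s ih].
  by split; apply: eq_integrable rint0 => // x _; rewrite /= big_nil ?re0 ?im0.
have e : (fun x => \sum_(j <- i :: s) u j x) = (fun x => u i x + \sum_(j <- s) u j x).
  by apply: funext => x; rewrite big_cons.
by rewrite e; exact: IntD.
Qed.
Lemma Iv_sum I (s : seq I) (u : I -> X -> F) :
  (forall i, Int (u i)) -> Iv (fun x => \sum_(i <- s) u i x) = \sum_(i <- s) Iv (u i).
Proof.
move=> h; elim: s => [|i s ih].
  by rewrite big_nil -[RHS]Iv0; apply: Iv_ext => x; rewrite big_nil.
rewrite big_cons -ih -IvD //; last exact: Int_sum.
by apply: Iv_ext => x; rewrite big_cons.
Qed.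

Local Notation Fm := (@Fmeasurable R dX X F re im).
Local Notation L2 := (in_L2 mu re im).

Lemma FmD u1 u2 : Fm u1 -> Fm u2 -> Fm (fun x => u1 x + u2 x).
Proof.
move=> [h1 h2] [h3 h4]; split.
  by apply: eq_measurable_fun (mfD h1 h3) => x _ /=; rewrite reD.
by apply: eq_measurable_fun (mfD h2 h4) => x _ /=; rewrite imD.
Qed.
Lemma FmZ c u : Fm u -> Fm (fun x => c * u x).
Proof.
move=> [h1 h2]; split.
  by apply: eq_measurable_fun (mfB (mfZ (re c) h1) (mfZ (im c) h2)) => x _ /=; rewrite reM.
by apply: eq_measurable_fun (mfD (mfZ (re c) h2) (mfZ (im c) h1)) => x _ /=; rewrite imM.
Qed.
Lemma FmM u1 u2 : Fm u1 -> Fm u2 -> Fm (fun x => u1 x * u2 x).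
Proof.
move=> [h1 h2] [h3 h4]; split.
  by apply: eq_measurable_fun (mfB (mfM h1 h3) (mfM h2 h4)) => x _ /=; rewrite reM.
by apply: eq_measurable_fun (mfD (mfM h1 h4) (mfM h2 h3)) => x _ /=; rewrite imM.
Qed.
Lemma Fmcj u : Fm u -> Fm (fun x => cj (u x)).
Proof.
move=> [h1 h2]; split.
  by apply: eq_measurable_fun h1 => x _ /=; rewrite recj.
by apply: eq_measurable_fun (mfZ (-1) h2) => x _ /=; rewrite imcj mulN1r.
Qed.
Lemma Fm0 : Fm (fun _ => 0).
Proof.
by split; apply: eq_measurable_fun (measurable_cst (0:R)) => x _ /=; rewrite ?re0 ?im0.
Qed.
Lemma mf_sqm u : Fm u -> mfun (fun x => sqm (u x)).
Proof. by move=> [h1 h2]; apply: mfD; apply: mfX. Qed.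

Lemma L2_rint u : L2 u -> rint (fun x => sqm (u x)).
Proof. move=> [hm hi]; apply: rint_ge0 => //; [exact: mf_sqm | move=> x; exact: sqm_ge0]. Qed.
Lemma L2_of u : Fm u -> rint (fun x => sqm (u x)) -> L2 u.
Proof. by move=> hm hi; split => //; rewrite RI_EFin // ltry. Qed.
Lemma L2_Fm u : L2 u -> Fm u. Proof. by case. Qed.
Lemma L2_EFin u : L2 u -> (\int[mu]_x (sqm (u x))%:E)%E = (RI (fun x => sqm (u x)))%:E.
Proof. by move=> h; rewrite RI_EFin //; exact: L2_rint. Qed.

Lemma L2D u1 u2 : L2 u1 -> L2 u2 -> L2 (fun x => u1 x + u2 x).
Proof.
move=> h1 h2; apply: L2_of; first exact: FmD (L2_Fm h1) (L2_Fm h2).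
apply: (rint_le (g := fun x => 2 * sqm (u1 x) + 2 * sqm (u2 x))).
- by apply: mf_sqm; apply: FmD (L2_Fm h1) (L2_Fm h2).
- by apply: rintD; apply: rintZ; apply: L2_rint.
- by move=> x; rewrite ger0_norm ?sqm_ge0 // sqmD2.
Qed.
Lemma L2Z c u : L2 u -> L2 (fun x => c * u x).
Proof.
move=> h; apply: L2_of; first exact: FmZ (L2_Fm h).
apply: eq_integrable (rintZ (sqm c) (L2_rint h)) => // x _ /=.
by rewrite sqmM.
Qed.
Lemma L2cj u : L2 u -> L2 (fun x => cj (u x)).
Proof.
move=> h; apply: L2_of; first exact: Fmcj (L2_Fm h).
by apply: eq_integrable (L2_rint h) => // x _ /=; rewrite sqm_cj.
Qed.
Lemma L20 : L2 (fun _ => 0).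
Proof.
apply: L2_of; first exact: Fm0.
by apply: eq_integrable rint0 => // x _ /=; rewrite /sqmod re0 im0 expr0n addr0.
Qed.
Lemma L2_sum I (s : seq I) (u : I -> X -> F) :
  (forall i, L2 (u i)) -> L2 (fun x => \sum_(i <- s) u i x).
Proof.
move=> h; elim: s => [|i s ih].
  have e : (fun x => \sum_(i <- [::]) u i x) = (fun _ => 0).
    by apply: funext => x; rewrite big_nil.
  by rewrite e; exact: L20.
have e : (fun x => \sum_(j <- i :: s) u j x) = (fun x => u i x + \sum_(j <- s) u j x).
  by apply: funext => x; rewrite big_cons.
by rewrite e; exact: L2D.
Qed.
Lemma L2_ext u1 u2 : (forall x, u1 x = u2 x) -> L2 u1 -> L2 u2.
Proof. by move=> e; rewrite (_ : u1 = u2) //; apply: funext. Qed.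

Lemma L2M u1 u2 : L2 u1 -> L2 u2 -> Int (fun x => u1 x * u2 x).
Proof.
move=> h1 h2; have [m1 m2] := FmM (L2_Fm h1) (L2_Fm h2).
have hg : rint (fun x => sqm (u1 x) + sqm (u2 x)) by apply: rintD; apply: L2_rint.
split; [apply: (rint_le m1 hg) | apply: (rint_le m2 hg)] => x;
  rewrite /= ?reM ?imM ler_norml; apply/andP; rewrite /sqmod; split.
all: set a := re (u1 x); set b := im (u1 x); set c := re (u2 x); set e := im (u2 x).
all: have := sqr_ge0 a; have := sqr_ge0 b; have := sqr_ge0 c; have := sqr_ge0 e.
all: have := sqr_ge0 (a+c); have := sqr_ge0 (a-c); have := sqr_ge0 (b+e); have := sqr_ge0 (b-e).
all: have := sqr_ge0 (a+e); have := sqr_ge0 (a-e); have := sqr_ge0 (b+c); have := sqr_ge0 (b-c).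
all: nra.
Qed.

Lemma Fint_iff u c : Fintegral_is mu re im u c <-> Int u /\ Iv u = c.
Proof.
split.
  move=> [h1 [h2 [h3 h4]]]; split; first by split.
  apply: eqF; rewrite ?reIv ?imIv /RI /Rintegral.
    by move: h3 => /= ->.
  by move: h4 => /= ->.
move=> [[h1 h2] <-]; split => //; split => //; split.
  by rewrite reIv -RI_EFin.
by rewrite imIv -RI_EFin.
Qed.

Lemma sqm_sum I (s : seq I) (z : I -> F) :
  sqm (\sum_(i <- s) z i) <= 2 ^+ size s * \sum_(i <- s) sqm (z i).
Proof.
elim: s => [|i s ih].
  by rewrite !big_nil /sqmod re0 im0 expr0n addr0 expr0 mul1r.
rewrite !big_cons /= exprS.
have h := sqmD2 (z i) (\sum_(j <- s) z j).
have h0 := sqm_ge0 (z i).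
have h1 : 1 <= 2 ^+ size s :> R by apply: exprn_ege1; rewrite ler1n. 
have hS : 0 <= \sum_(j <- s) sqm (z j) by apply: sumr_ge0 => j _; exact: sqm_ge0.
nra.
Qed.

Context (n : nat).
Local Notation Vn := 'rV[F]_n.
Local Notation vn2 := (@vnorm2 R F re im n).
Local Notation inn := (@inner F cj n).
Definition Nc : R := 2 ^+ size (index_enum 'I_n).

Lemma sqm_le_vn2 (v : Vn) i : sqm (v ord0 i) <= vn2 v.
Proof.
rewrite /vnorm2 (bigD1 i) //=.
have : 0 <= \sum_(j < n | j != i) sqm (v ord0 j) by apply: sumr_ge0 => j _; exact: sqm_ge0.
lra.
Qed.
Lemma vn2_ge0 (v : Vn) : 0 <= vn2 v.
Proof. by apply: sumr_ge0 => j _; exact: sqm_ge0. Qed.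
Lemma vn2_eq0 (v : Vn) : vn2 v = 0 -> v = 0.
Proof.
move=> h; apply/matrixP => i j; rewrite ord1 mxE; apply: sqm_eq0.
apply/eqP; rewrite eq_le sqm_ge0 andbT -h; exact: sqm_le_vn2.
Qed.
Lemma Nc_ge0 : 0 <= Nc. Proof. by rewrite /Nc exprn_ge0. Qed.

Lemma sqm_inner (v w : Vn) : sqm (inn v w) <= Nc * vn2 v * vn2 w.
Proof.
rewrite /inner; apply: le_trans (sqm_sum _ _) _.
rewrite -mulrA ler_wpM2l ?Nc_ge0 // /vnorm2 mulr_sumr; apply: ler_sum => i _.
rewrite sqmM sqm_cj ler_wpM2r ?sqm_ge0 //; exact: sqm_le_vn2.
Qed.

Definition crd (Phi : X -> Vn) (i : 'I_n) (x : X) : F := Phi x ord0 i.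
Definition av (Phi : X -> Vn) (v : Vn) (x : X) : F := inn v (Phi x).
Definition gram (Phi : X -> Vn) : 'M[F]_n :=
  \matrix_(i, l) Iv (fun x => cj (Phi x ord0 i) * Phi x ord0 l).

Local Notation L2v := (@in_L2vec R dX X mu F re im n).

Lemma av_L2 Phi v : L2v Phi -> L2 (av Phi v).
Proof.
move=> h; rewrite /av /inner; apply: L2_sum => i; apply: L2Z; apply: L2cj; exact: h.
Qed.

Lemma Iv_double (g h : 'I_n -> X -> F) (al be : 'I_n -> F) :
  (forall i, L2 (g i)) -> (forall i, L2 (h i)) ->
  Iv (fun x => (\sum_i al i * g i x) * (\sum_l be l * h l x)) =
  \sum_i \sum_l al i * be l * Iv (fun x => g i x * h l x).
Proof.
move=> hg hh.
have e : forall x, (\sum_i al i * g i x) * (\sum_l be l * h l x) =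
   \sum_i \sum_l (al i * be l) * (g i x * h l x).
  move=> x; rewrite mulr_suml; apply: eq_bigr => i _; rewrite mulr_sumr.
  by apply: eq_bigr => l _; rewrite mulrACA.
rewrite (Iv_ext e) Iv_sum; last first.
  by move=> i; apply: Int_sum => l; apply: IntZ; apply: L2M.
apply: eq_bigr => i _; rewrite Iv_sum; last by move=> l; apply: IntZ; apply: L2M.
by apply: eq_bigr => l _; rewrite IvZ //; apply: L2M.
Qed.

Lemma cj_av Phi v x : cj (av Phi v x) = \sum_l cj (v ord0 l) * Phi x ord0 l.
Proof. by rewrite /av /inner cj_sum; apply: eq_bigr => l _; rewrite cjM cjK. Qed.

Lemma Q_gram Phi (u : Vn) : L2v Phi ->
  Iv (fun x => av Phi u x * cj (av Phi u x)) =
  \sum_l ((u *m gram Phi) ord0 l) * cj (u ord0 l).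
Proof.
move=> h.
rewrite (Iv_ext (u2 := fun x => (\sum_i u ord0 i * cj (Phi x ord0 i)) *
     (\sum_l cj (u ord0 l) * Phi x ord0 l))); last by move=> x; rewrite cj_av.
rewrite (Iv_double (g := fun i x => cj (Phi x ord0 i)) (h := fun l x => Phi x ord0 l));
  last 2 first.
- by move=> i; apply: L2cj; exact: h.
- by move=> i; exact: h.
rewrite exchange_big; apply: eq_bigr => l _; rewrite !mxE mulr_suml.
by apply: eq_bigr => i _; rewrite !mxE; ring.
Qed.

Lemma Q_EFin Phi v : L2v Phi ->
  (\int[mu]_x (sqm (inn v (Phi x)))%:E)%E =
  (re (Iv (fun x => av Phi v x * cj (av Phi v x))))%:E.
Proof.
move=> h; have := L2_EFin (av_L2 v h); rewrite /av => ->; congr EFin.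
by rewrite reIv; apply: RI_ext => x; rewrite sqmE.
Qed.

Lemma gram_det Phi : is_cont_frame mu re im cj Phi -> \det (gram Phi) != 0.
Proof.
move=> [hL [A [B [A0 [AB hf]]]]]; apply/negP => /det0P [u un0 hu].
have [h1 _] := hf u.
move: h1; rewrite Q_EFin // Q_gram // hu (eq_bigr (fun _ => 0)); last first.
  by move=> l _; rewrite mxE mul0r.
rewrite big1 // re0 lee_fin pmulr_rle0 // => h2.
have : vn2 u = 0 by apply/eqP; rewrite eq_le h2 vn2_ge0.
by move/vn2_eq0; move/eqP: un0.
Qed.

Lemma frame_of_gram Phi : L2v Phi -> \det (gram Phi) != 0 ->
  is_cont_frame mu re im cj Phi.
Proof.
move=> hL hdet.
set M := gram Phi.
have uM : M \in unitmx by rewrite unitmxE unitfE.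
set c := invmx M.
have Mc : M *m c = 1%:M by exact: mulmxV.
pose k j x := \sum_l c l j * Phi x ord0 l.
have kL : forall j, L2 (k j).
  by move=> j; apply: L2_sum => l; apply: L2Z; exact: hL.
pose K j := RI (fun x => sqm (k j x)).
have K0 : forall j, 0 <= K j by move=> j; apply: RI_ge0 => x; exact: sqm_ge0.
pose Q v := RI (fun x => sqm (av Phi v x)).
have Q0 : forall v, 0 <= Q v by move=> v; apply: RI_ge0 => x; exact: sqm_ge0.
have key : forall v j, Iv (fun x => av Phi v x * k j x) = v ord0 j.
  move=> v j; rewrite /av /inner /k.
  rewrite (@Iv_double (fun i x => cj (Phi x ord0 i)) (fun l x => Phi x ord0 l)
     (fun i => v ord0 i) (fun l => c l j)); last 2 first.
  - by move=> i; apply: L2cj; exact: hL.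
  - by move=> i; exact: hL.
  have e : v ord0 j = ((v *m M) *m c) ord0 j by rewrite -mulmxA Mc mulmx1.
  rewrite [RHS]e mxE exchange_big; apply: eq_bigr => l _.
  rewrite mxE mulr_suml; apply: eq_bigr => i _; rewrite /M /gram mxE; ring.
have hj : forall (v : Vn) j, sqm (v ord0 j) <= (K j + 1) * Q v.
  move=> v j; set z := v ord0 j; set s := K j + 1.
  have s0 : 0 < s by rewrite /s ltr_wpDl // K0.
  have aL := av_L2 v hL.
  have wL : L2 (fun x => cj z * k j x) by apply: L2Z; exact: kL.
  have e1 : sqm z = RI (fun x => re (av Phi v x * (cj z * k j x))).
    have kz : Iv (fun x => av Phi v x * k j x) = z := key v j.
    rewrite sqmE -{1}kz mulrC -IvZ; last exact: L2M.
    by rewrite reIv; apply: RI_ext => x; rewrite mulrCA.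
  have hr1 : rint (fun x => re (av Phi v x * (cj z * k j x))) by case: (L2M aL wL).
  have hr2 : rint (fun x => s * sqm (av Phi v x) + s^-1 * (sqm z * sqm (k j x))).
    by apply: rintD; apply: rintZ => //; [exact: L2_rint | apply: rintZ; exact: L2_rint].
  have eR : RI (fun x => s * sqm (av Phi v x) + s^-1 * (sqm z * sqm (k j x))) =
      s * Q v + s^-1 * (sqm z * K j).
    rewrite RID; last 2 first.
    - apply: rintZ; exact: L2_rint aL.
    - apply: rintZ; apply: rintZ; exact: L2_rint (kL j).
    rewrite RIZ; last exact: L2_rint aL.
    rewrite RIZ; last by apply: rintZ; exact: L2_rint (kL j).
    by rewrite RIZ //; exact: L2_rint (kL j).
  have le1 : 2 * sqm z <= s * Q v + s^-1 * (sqm z * K j).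
    rewrite -eR {1}e1 -RIZ //; apply: RI_le => //; first exact: rintZ.
    by move=> x; rewrite -(sqm_cj z) -sqmM; exact: re_bound.
  have z0 : 0 <= sqm z by exact: sqm_ge0.
  have le2 : s^-1 * (sqm z * K j) <= sqm z.
    rewrite mulrC ler_pdivrMr // /s; have := K0 j; nra.
  have := Q0 v; lra.
pose S := \sum_j (K j + 1).
have S0 : 0 <= S by apply: sumr_ge0 => j _; rewrite addr_ge0 ?K0.
pose A := (1 + S)^-1.
have A0 : 0 < A by rewrite invr_gt0 ltr_wpDr.
pose C := RI (fun x => vn2 (Phi x)).
have hC : rint (fun x => vn2 (Phi x)).
  by rewrite /vnorm2; apply: rint_sum => i; apply: L2_rint; exact: hL.
have C0 : 0 <= C by apply: RI_ge0 => x; exact: vn2_ge0.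
split => //; exists A, (A + Nc * C); split => //; split.
  by rewrite lerDl mulr_ge0 ?Nc_ge0.
move=> v.
have := L2_EFin (av_L2 v hL); rewrite /av => ->.
rewrite !lee_fin; split.
  rewrite mulrC ler_pdivrMr ?ltr_wpDr //.
  have h1 : vn2 v <= S * Q v.
    by rewrite /vnorm2 /S mulr_suml; apply: ler_sum => j _; exact: hj.
  move: h1; have := Q0 v; rewrite /Q /av; nra.
apply: (@le_trans _ _ (RI (fun x => Nc * vn2 v * vn2 (Phi x)))).
  apply: RI_le; [exact: L2_rint (av_L2 v hL) | exact: rintZ |].
  move=> x; exact: sqm_inner.
rewrite RIZ // -/C.
have := vn2_ge0 v; have := Nc_ge0; nra.
Qed.

Lemma exists_nonroot (p : {poly F}) (t0 : R) : p != 0 -> 0 < t0 ->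
  exists t, (0 < t <= t0) /\ ~~ root p (rl t).
Proof.
move=> p0 t00.
have [//|nex] := pselect (exists t, (0 < t <= t0) /\ ~~ root p (rl t)).
have allr : forall t, 0 < t <= t0 -> root p (rl t).
  move=> t ht; case: (boolP (root p (rl t))) => // hn.
  by exfalso; apply: nex; exists t.
pose f (k : nat) := rl (t0 / (k.+1)%:R).
pose rs := map f (iota 0 (size p)).
have hall : all (root p) rs.
  apply/allP => z /mapP [k _ ->]; apply: allr.
  rewrite divr_gt0 ?ltr0Sn //= ler_pdivrMr ?ltr0Sn //.
  by rewrite ler_peMr ?(ltW t00) // ler1n.
have hu : uniq rs.
  rewrite map_inj_uniq ?iota_uniq // => k1 k2 /(congr1 re); rewrite !rerl.
  move/(mulfI (lt0r_neq0 t00))/invr_inj/eqP; rewrite eqr_nat eqSS => /eqP //.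
have := max_poly_roots p0 hall hu.
by rewrite size_map size_iota ltnn.
Qed.

Lemma L2B u1 u2 : L2 u1 -> L2 u2 -> L2 (fun x => u1 x - u2 x).
Proof.
move=> h1 h2; apply: L2_ext (L2D h1 (L2Z (-1) h2)) => x.
by rewrite mulN1r.
Qed.

Lemma cor_gen : cor62_statement mu re im cj n.
Proof.
move=> h d hh [Phi0 [hfr0 hT0]] Psi hPsi hTPsi eps eps0.
have hL0 : L2v Phi0 by case: hfr0.
pose Phit (t : R) x : Vn := Psi x + rl t *: (Phi0 x - Psi x).
pose p i x := Psi x ord0 i.
pose e i x := Phi0 x ord0 i - Psi x ord0 i.
have pL : forall i, L2 (p i) by move=> i; exact: hPsi.
have eL : forall i, L2 (e i) by move=> i; apply: L2B; [exact: hL0|exact: hPsi].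
have crdt : forall t i x, Phit t x ord0 i = p i x + rl t * e i x.
  by move=> t i x; rewrite !mxE.
have Lt : forall t, L2v (Phit t).
  move=> t i; apply: L2_ext (L2D (pL i) (L2Z (rl t) (eL i))) => x.
  by rewrite crdt.
have Tt : forall t, Tmap_is mu re im h (Phit t) d.
  move=> t i; have [I0 V0] := iffLR (Fint_iff _ _) (hT0 i).
  have [I1 V1] := iffLR (Fint_iff _ _) (hTPsi i).
  have ex : forall x, h x * Phit t x ord0 i =
     h x * Psi x ord0 i + rl t * (h x * Phi0 x ord0 i + (-1) * (h x * Psi x ord0 i)).
    by move=> x; rewrite crdt /p /e; ring.
  apply/Fint_iff; split.
    rewrite (funext ex).
    by apply: IntD => //; apply: IntZ; apply: IntD => //; apply: IntZ.
  rewrite (Iv_ext ex) IvD //; last by apply: IntZ; apply: IntD => //; apply: IntZ.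
  rewrite IvZ; last by apply: IntD => //; apply: IntZ.
  rewrite IvD //; last exact: IntZ.
  by rewrite IvZ // V0 V1; ring.
pose CD := RI (fun x => vn2 (Phi0 x - Psi x)).
have hCD : rint (fun x => vn2 (Phi0 x - Psi x)).
  rewrite /vnorm2; apply: rint_sum => i; apply: L2_rint.
  by apply: (L2_ext _ (eL i)) => x; rewrite /e !mxE.
have CD0 : 0 <= CD by apply: RI_ge0 => x; exact: vn2_ge0.
have dist : forall t, L2dist2 mu re im (Phit t) Psi = (t ^+ 2 * CD)%:E.
  move=> t.
  have ex : forall x, vn2 (Phit t x - Psi x) = t ^+ 2 * vn2 (Phi0 x - Psi x).
    move=> x; rewrite /Phit addrC addKr /vnorm2 mulr_sumr; apply: eq_bigr => i _.
    by rewrite mxE sqmM sqm_rl.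
  rewrite /L2dist2 (eq_integral (fun x => (t ^+ 2 * vn2 (Phi0 x - Psi x))%:E)); last first.
    by move=> x _; rewrite ex.
  by rewrite RI_EFin ?RIZ //; exact: rintZ.
pose a0 i l := Iv (fun x => cj (p i x) * p l x).
pose a1 i l := Iv (fun x => cj (p i x) * e l x) + Iv (fun x => cj (e i x) * p l x).
pose a2 i l := Iv (fun x => cj (e i x) * e l x).
pose Pm : 'M[{poly F}]_n :=
  \matrix_(i, l) ((a0 i l)%:P + (a1 i l)%:P * 'X + (a2 i l)%:P * 'X^2).
have gramt : forall t, gram (Phit t) = map_mx (horner_eval (rl t)) Pm.
  move=> t; apply/matrixP => i l; rewrite !mxE horner_evalE !hornerE.
  have ex : forall x, cj (Phit t x ord0 i) * Phit t x ord0 l =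
     cj (p i x) * p l x + rl t * (cj (p i x) * e l x + cj (e i x) * p l x)
     + rl t ^+ 2 * (cj (e i x) * e l x).
    by move=> x; rewrite !crdt cjD cjM cjrl; ring.
  have M1 := L2M (L2cj (pL i)) (pL l).
  have M2 := L2M (L2cj (pL i)) (eL l).
  have M3 := L2M (L2cj (eL i)) (pL l).
  have M4 := L2M (L2cj (eL i)) (eL l).
  rewrite (Iv_ext ex) IvD; [|by apply: IntD => //; apply: IntZ; apply: IntD|by apply: IntZ].
  rewrite IvD //; last by apply: IntZ; apply: IntD.
  rewrite !IvZ //; last exact: IntD.
  rewrite IvD // /a0 /a1 /a2 /=; ring.
have Phit1 : Phit 1 = Phi0.
  by apply: funext => x; rewrite /Phit rl1 scale1r addrC subrK.
have Pm0 : \det Pm != 0.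
  have := gram_det hfr0; rewrite -Phit1 gramt det_map_mx.
  by apply: contra => /eqP ->; rewrite rmorph0.
pose t0 := eps / (CD + 1).
have t00 : 0 < t0 by rewrite divr_gt0 // ltr_wpDl.
have [t [/andP [t0p tle] hr]] := exists_nonroot Pm0 t00.
exists (Phit t); split.
  apply: frame_of_gram => //; rewrite gramt det_map_mx.
  exact: hr.
split => //; rewrite dist lte_fin.
have et : t0 * (CD + 1) = eps by rewrite /t0 divfK // gt_eqF // ltr_wpDl.
have h1 : t ^+ 2 * CD <= t0 ^+ 2 * CD.
  by rewrite ler_wpM2r // ler_pXn2r // ?nnegrE ltW.
apply: le_lt_trans h1 _.
rewrite -et; nra.
Qed.
End Gen.

Local Open Scope ereal_scope.

Theorem corollary6p2 (R : realType) (dX : measure_display)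
  (X : measurableType dX) (mu : {measure set X -> \bar R}) (n : nat) :
  (1 <= n)%N ->
  cor62_statement mu (@reR R) (@imR R) (@cjR R) n /\
  cor62_statement mu (@reC R) (@imC R) (@cjC R) n.
Proof.
move=> _; split.
- apply: (@cor_gen R dX X mu R (@reR R) (@imR R) (@cjR R) (fun a b => a));
    rewrite /reR /imR /cjR //=.
  all: try (move=> *; ring).
  by left.
- apply: (@cor_gen R dX X mu (complex.complex R) (@reC R) (@imC R) (@cjC R)
     (fun a b => complex.Complex a b)); rewrite /reC /imC /cjC //=.
  all: try (by right).
  all: try (by case=> ? ?; case=> ? ?).
  all: try (by case=> ? ?).
  by case=> ? ?; case=> ? ? /= -> ->.
Qed.
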